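(* Let $m,n$ be positive integers and $P\in\Gamma^\pi_{m,n}$. If $m$ is even, then $P$ is an extreme point of $\Gamma^\pi_{m,n}$ if and only if the bipartite graph associated with $P$ is a forest and every row vertex has degree $1$. If $m=2k+1$ is odd, then $P$ is an extreme point of $\Gamma^\pi_{m,n}$ if and only if the bipartite graph associated with $P$ satisfies both: (i) it is a forest; (ii) the middle row vertex $r_{k+1}$ has degree $1$ or $2$, and every other row vertex has degree $1$.
   Context: A real $m\times n$ matrix is stochastic if its entries are nonnegative and each row sums to $1$. $A=(a_{i,j})$ is centrosymmetric if $a_{i,j}=a_{m+1-i,n+1-j}$ for all $i,j$. $\Gamma^\pi_{m,n}$ is the convex set of $m\times n$ centrosymmetric stochastic matrices. The bipartite graph associated with $A\in M_{m,n}$ has vertex classes $\{r_1,\dots,r_m\}$ (row vertices) and $\{s_1,\dots,s_n\}$ (column vertices), with an edge between $r_i$ and $s_j$ if and only if $a_{i,j}\neq 0$. *)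

(* Defs.v *)
From mathcomp Require Import all_boot all_order all_algebra.
From mathcomp Require Import reals.
Set Implicit Arguments. Unset Strict Implicit. Unset Printing Implicit Defensive.
Import Order.TTheory GRing.Theory Num.Theory.
Local Open Scope ring_scope.

Section Defs.
Variable R : realType.

Definition stochastic m n (A : 'M[R]_(m, n)) : Prop :=
  (forall i j, 0 <= A i j) /\ (forall i, \sum_(j < n) A i j = 1).

(* a_{i,j} = a_{m+1-i, n+1-j}  (0-based: rev_ord) *)
Definition centrosymmetric m n (A : 'M[R]_(m, n)) : Prop :=
  forall i j, A i j = A (rev_ord i) (rev_ord j).

Definition Gamma_pi m n (A : 'M[R]_(m, n)) : Prop :=
  stochastic A /\ centrosymmetric A.

Definition extreme_point m n (S : 'M[R]_(m, n) -> Prop) (P : 'M[R]_(m, n)) : Prop :=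
  S P /\ forall (A B : 'M[R]_(m, n)) (t : R), S A -> S B -> 0 < t < 1 ->
    P = t *: A + (1 - t) *: B -> A = P /\ B = P.

(* bipartite graph of A: vertices inl i = r_i (rows), inr j = s_j (columns) *)
Definition bigraph m n (A : 'M[R]_(m, n)) : rel ('I_m + 'I_n)%type :=
  fun u v => match u, v with
             | inl i, inr j => A i j != 0
             | inr j, inl i => A i j != 0
             | _, _ => false
             end.

Definition row_degree m n (A : 'M[R]_(m, n)) (i : 'I_m) : nat :=
  #|[set j : 'I_n | A i j != 0]|.
End Defs.

Definition forest (T : finType) (e : rel T) : Prop :=
  ~ exists p : seq T, [/\ uniq p, (3 <= size p)%N & cycle e p].

(* Main.v *)
Require Import Defs.
From mathcomp Require Import all_boot all_order all_algebra.
From mathcomp Require Import reals.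
From mathcomp Require Import ring lra zify.
Import Order.TTheory GRing.Theory Num.Theory.
Local Open Scope ring_scope.

Lemma rev_fix_uniq n (j0 j1 : 'I_n) : rev_ord j0 = j0 -> rev_ord j1 = j1 -> j0 = j1.
Proof.
move=> /(congr1 val) /= h0 /(congr1 val) /= h1; apply/val_inj => /=.
have := ltn_ord j0; have := ltn_ord j1; lia.
Qed.

Lemma centro_row (R : realType) m n (X : 'M[R]_(m,n)) i j :
  centrosymmetric X -> rev_ord i = i -> X i (rev_ord j) = X i j.
Proof. by move=> hX hi; rewrite hX rev_ordK hi. Qed.

Lemma row_det (R : realType) m n (P X : 'M[R]_(m,n)) (i : 'I_m) :
  Gamma_pi P -> Gamma_pi X -> (forall j, P i j = 0 -> X i j = 0) ->
  (if rev_ord i == i then (row_degree P i = 1%N \/ row_degree P i = 2%N)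
   else row_degree P i = 1%N) ->
  forall j, X i j = if P i j != 0 then ((row_degree P i)%:R)^-1 else 0.
Proof.
move=> [[P0 P1] Pc] [[X0 X1] Xc] hz.
rewrite /row_degree; set S := [set j | P i j != 0].
have inS j : (j \in S) = (P i j != 0) by rewrite inE.
have hz' j : j \notin S -> X i j = 0 by rewrite inS negbK => /eqP /hz.
have case1 : #|S| = 1%N -> forall j, X i j = if P i j != 0 then (#|S|%:R)^-1 else 0.
  move=> h1; move/eqP: (h1) => /cards1P [j0 hS].
  have hX0 : X i j0 = 1.
    rewrite -(X1 i) (bigD1 j0) //= big1 ?addr0 // => j hj; apply: hz'.
    by rewrite hS inE.
  move=> j; rewrite h1 invr1 -inS hS inE.
  case: eqP => [->//|hj]; apply: hz'; rewrite hS inE; exact/eqP.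
case: eqP => hi; last exact: case1.
case=> [|h2]; first exact: case1.
move/eqP: (h2) => /cards2P [j0 [j1 [hne hS]]].
have hr0 : rev_ord j0 = j1.
  have hin j : j \in S -> rev_ord j \in S.
    by rewrite !inS centro_row.
  have : rev_ord j0 \in S by apply: hin; rewrite hS !inE eqxx.
  rewrite hS !inE => /orP [/eqP e0|/eqP //].
  have : rev_ord j1 \in S by apply: hin; rewrite hS !inE eqxx orbT.
  rewrite hS !inE => /orP [/eqP e1|/eqP e1].
    have ej := rev_ord_inj (etrans e1 (esym e0)); by rewrite ej eqxx in hne.
  by move: hne; rewrite (rev_fix_uniq _ _ _ e0 e1) eqxx.
have hX01 : X i j1 = X i j0 by rewrite -hr0 centro_row.
have hsum : X i j0 + X i j1 = 1.
  rewrite -(X1 i) (bigD1 j0) //= (bigD1 j1) 1?eq_sym //= big1 ?addr0 // => j /andP [hj1 hj0].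
  by apply: hz'; rewrite hS !inE negb_or hj0 hj1.
move=> j; rewrite h2 -inS hS !inE.
have h0 : X i j0 = 2%:R^-1.
  have -> : X i j0 = (X i j0 + X i j1) / 2 by rewrite hX01; field.
  by rewrite hsum mul1r.
case: eqP => [->|hj0] /=; first by [].
case: eqP => [->|hj] /=; first by rewrite hX01.
apply: hz'; rewrite hS !inE negb_or; by apply/andP; split; apply/eqP.
Qed.

Definition rcond (R : realType) m n (P : 'M[R]_(m,n)) (i : 'I_m) : Prop :=
  if rev_ord i == i then (row_degree P i = 1%N \/ row_degree P i = 2%N)
  else row_degree P i = 1%N.
Arguments rcond {R m n}.

Lemma suff_ext (R : realType) m n (P : 'M[R]_(m,n)) :
  Gamma_pi P -> (forall i, rcond P i) -> extreme_point (@Gamma_pi R m n) P.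
Proof.
move=> hP hc; split => // A B t hA hB /andP [t0 t1] hAB.
have hPe i j : P i j = t * A i j + (1 - t) * B i j.
  by move/matrixP: hAB => /(_ i j); rewrite !mxE.
have hA0 i j : 0 <= A i j by case: hA => [[]].
have hB0 i j : 0 <= B i j by case: hB => [[]].
have hz i j : P i j = 0 -> A i j = 0.
  rewrite hPe => h; have := hA0 i j; have := hB0 i j; nra.
have eA : A = P.
  apply/matrixP => i j.
  rewrite (@row_det _ _ _ P A i hP hA (hz i) (hc i)) -(@row_det _ _ _ P P i hP hP (fun j (h : P i j = 0) => h) (hc i)).
  by [].
split => //; apply/matrixP => i j.
have := hPe i j; rewrite eA; nra.
Qed.

Lemma perturb (R : realType) m n (P : 'M[R]_(m,n)) i j0 j1 :
  extreme_point (@Gamma_pi R m n) P -> j0 != j1 -> P i j0 != 0 -> P i j1 != 0 ->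
  (rev_ord i != i \/ rev_ord j0 != j1) -> False.
Proof.
move=> [[[P0 P1] Pc] hext] hne hp0 hp1 hor.
have q0 : 0 < P i j0 by rewrite lt_def hp0 P0.
have q1 : 0 < P i j1 by rewrite lt_def hp1 P0.
set mu := Num.min (P i j0) (P i j1).
have mu0 : mu <= P i j0 by rewrite ge_min lexx.
have mu1 : mu <= P i j1 by rewrite ge_min lexx orbT.
have mup : 0 < mu by rewrite lt_min q0 q1.
set eps := mu / 2.
have e0 : 0 < eps by rewrite /eps; lra.
have e1 : 2 * eps <= P i j0 by rewrite /eps; lra.
have e2 : 2 * eps <= P i j1 by rewrite /eps; lra.
pose E a b := if a == i then (if b == j0 then eps else if b == j1 then - eps else 0) else 0.
have Eb a b : - eps <= E a b <= eps.
  rewrite /E; case: (a == i); last by apply/andP; split; lra.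
  case: (b == j0); first by apply/andP; split; lra.
  case: (b == j1); by apply/andP; split; lra.
have EP a b : E a b != 0 -> 2 * eps <= P a b.
  rewrite /E; case: (eqVneq a i) => [->|_]; last by rewrite eqxx.
  case: (eqVneq b j0) => [->//|_]; case: (eqVneq b j1) => [->//|_]; by rewrite eqxx.
have EP' a b : E (rev_ord a) (rev_ord b) != 0 -> 2 * eps <= P a b.
  by move/EP; rewrite -Pc.
have Esum a : \sum_b E a b = 0.
  rewrite /E; case: (a == i); last by rewrite big1.
  rewrite (bigD1 j0) //= eqxx (bigD1 j1) 1?eq_sym //= (negbTE hne) eqxx.
  rewrite big1 ?addr0 ?addrN // => b /andP [h1 h0].
  by rewrite (negbTE h0) (negbTE h1).
have [D hD] : {D : 'M[R]_(m,n) | forall a b, D a b = E a b + E (rev_ord a) (rev_ord b)}.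
  by exists (\matrix_(a, b) (E a b + E (rev_ord a) (rev_ord b))) => a b; rewrite mxE.
have Dsum a : \sum_b D a b = 0.
  under eq_bigr do rewrite hD.
  rewrite big_split /= Esum add0r (reindex_inj rev_ord_inj) /=.
  under eq_bigr do rewrite rev_ordK.
  exact: Esum.
have Dc a b : D a b = D (rev_ord a) (rev_ord b).
  by rewrite !hD !rev_ordK addrC.
have DP a b : - P a b <= D a b <= P a b.
  rewrite hD; have := Eb a b; have := Eb (rev_ord a) (rev_ord b).
  have := P0 a b.
  case: (eqVneq (E a b) 0) => [->|/EP h].
    case: (eqVneq (E (rev_ord a) (rev_ord b)) 0) => [->|/EP' h].
      move=> *; apply/andP; split; lra.
    move=> ? /andP [? ?] ?; apply/andP; split; lra.
  move=> ? /andP [? ?] /andP [? ?]; apply/andP; split; lra.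
have hG s : (s = 1 \/ s = -1) -> Gamma_pi (P + s *: D).
  move=> hs; split; [split|].
  - move=> a b; rewrite !mxE; have /andP [? ?] := DP a b.
    by case: hs => ->; lra.
  - move=> a; under eq_bigr do rewrite !mxE.
    by rewrite big_split /= -mulr_sumr Dsum P1 mulr0 addr0.
  - by move=> a b; rewrite !mxE {1}Pc {1}Dc.
have := hext (P + 1 *: D) (P + (-1) *: D) (1/2) (hG 1 (or_introl erefl))
   (hG (-1) (or_intror erefl)).
case.
- by apply/andP; split; lra.
- by apply/matrixP => a b; rewrite !mxE; lra.
move/matrixP => /(_ i j0); rewrite !mxE => hDe _.
have hD0 : D i j0 = 0 by lra.
have : 0 <= E (rev_ord i) (rev_ord j0).
  rewrite /E; case: eqP => hri; last lra.
  case: eqP => _; first lra.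
  case: hor => [|/negbTE ->]; first by rewrite hri eqxx.
  lra.
move: hD0; rewrite hD /E eqxx eqxx -/(E _ _); lra.
Qed.

Definition two (R : realType) m n (P : 'M[R]_(m,n)) (i : 'I_m) : Prop :=
  exists j j', [/\ j != j', P i j != 0 & P i j' != 0].
Arguments two {R m n}.

Lemma forest_core (R : realType) m n (P : 'M[R]_(m,n)) :
  (forall i1 i2, two P i1 -> two P i2 -> i1 = i2) ->
  forall a j c rest, uniq (a :: inr j :: c :: rest) ->
  cycle (bigraph P) (a :: inr j :: c :: rest) -> False.
Proof.
move=> h a j c rest hu; rewrite /cycle rcons_cons rcons_cons /=.
case: a hu => [i1|j1] hu; last by [].
case: c hu => [i2|j2] hu; last by rewrite andbF.
move=> /and3P [h1 h2]; rewrite rcons_path => /andP [hp hl].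
move: hu => /= /andP [hu1 /andP [hu2 /andP [hu3 hu4]]].
have ne12 : i1 != i2.
  by apply/eqP => e; move: hu1; rewrite e !inE eqxx !orbT.
have hz := mem_last (inl i2) rest.
have t1 : two P i1.
  move: hl hz; case: (last (inl i2) rest) => [i3|j3] //= hl hz.
  exists j, j3; split => //; apply/eqP => e; move: hu2; rewrite e.
  by rewrite hz.
have t2 : two P i2.
  case: rest hp hl hu2 {hz hu1 hu3 hu4 t1} => [|d r] /=; first by [].
  case: d => [i3|j3] //= /andP [hd _] _ hu2.
  exists j, j3; split => //; apply/eqP => e; move: hu2; rewrite e !inE eqxx.
  by rewrite !orbT.
by move: ne12; rewrite (h _ _ t1 t2) eqxx.
Qed.
Arguments forest_core {R m n P}.

Lemma forest_of (R : realType) m n (P : 'M[R]_(m,n)) :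
  (forall i1 i2, two P i1 -> two P i2 -> i1 = i2) -> forest (bigraph P).
Proof.
move=> h [p [hu hs hc]].
case: p hu hs hc => [|a [|b [|c rest]]] // hu _ hc.
case: b hu hc => [i|j] hu hc; last exact: (forest_core h _ _ _ _ hu hc).
have : c \in [:: c] by rewrite inE.
move: hc; rewrite -(rot_cycle 1) -(rot_uniq 1) in hu *.
rewrite rot1_cons !rcons_cons in hu * => hc _.
case: c hu hc => [i'|j'] hu hc.
  by move: hc; rewrite /cycle /=.
case: rest hu hc => [|d r] hu hc; first exact: (forest_core h _ _ _ _ hu hc).
rewrite rcons_cons in hu hc; exact: (forest_core h _ _ _ _ hu hc).
Qed.

Lemma nec (R : realType) m n (P : 'M[R]_(m,n)) :
  extreme_point (@Gamma_pi R m n) P -> forall i, rcond P i.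
Proof.
move=> hext i; have [[[P0 P1] Pc] _] := hext.
have pert := @perturb R m n P i.
rewrite /rcond /row_degree; set S := [set j | P i j != 0].
have S0 : (0 < #|S|)%N.
  case: (pickP (fun j => P i j != 0)) => [j hj|h].
    by apply/card_gt0P; exists j; rewrite inE.
  exfalso; move: (P1 i); rewrite big1 => [/eqP|j _]; first by rewrite eq_sym oner_eq0.
  by move: (h j) => /negbFE /eqP.
case: eqP => hri.
- case hS: #|S| S0 => [|[|[|k]]] // _; [by left | by right|].
  have : (2 < #|S|)%N by rewrite hS.
  move/card_gt2P => [x [y [z [[hx hy hz] [nxy nyz nzx]]]]].
  rewrite !inE in hx hy hz.
  case: (eqVneq (rev_ord x) y) => [ery|nry].
    exfalso; apply: (pert x z hext _ hx hz); first by rewrite eq_sym.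
    by right; rewrite ery.
  by exfalso; apply: (pert x y hext nxy hx hy); right.
- case hS: #|S| S0 => [|[|k]] // _.
  have : (1 < #|S|)%N by rewrite hS.
  move/card_gt1P => [x [y [hx hy nxy]]]; rewrite !inE in hx hy.
  by exfalso; apply: (pert x y hext nxy hx hy); left; apply/eqP.
Qed.

Lemma two_deg (R : realType) m n (P : 'M[R]_(m,n)) i :
  two P i -> row_degree P i = 1%N -> False.
Proof.
move=> [j [j' [ne h h']]]; rewrite /row_degree => /eqP/cards1P [x hx].
have : j \in [set j | P i j != 0] by rewrite inE.
have : j' \in [set j | P i j != 0] by rewrite inE.
by rewrite hx !inE => /eqP e' /eqP e; move: ne; rewrite e e' eqxx.
Qed.

Lemma forest_rc (R : realType) m n (P : 'M[R]_(m,n)) :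
  (forall i, rcond P i) -> forest (bigraph P).
Proof.
move=> hc; apply: forest_of => i1 i2 t1 t2.
have fx i : two P i -> rev_ord i = i.
  move=> t; have := hc i; rewrite /rcond; case: eqP => // _ /(two_deg _ _ _ _ _ t) [].
exact: rev_fix_uniq _ _ _ (fx _ t1) (fx _ t2).
Qed.

Lemma fix_odd m k (i : 'I_m) : m = (2 * k + 1)%N -> (rev_ord i == i) = (val i == k).
Proof.
move=> hm; have hi := ltn_ord i; apply/eqP/eqP => [/(congr1 val) /= h|h].
  lia.
apply/val_inj; rewrite /rev_ord /=; have h2 : nat_of_ord i = k := h; lia.
Qed.

Lemma fix_even m (i : 'I_m) : ~~ odd m -> rev_ord i != i.
Proof.
move=> hev; apply/eqP => /(congr1 val) /= h.
have e : m = (i + i).+1 by have := ltn_ord i; lia.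
by move: hev; rewrite e /= oddD addbb.
Qed.

Theorem mainTheorem12 (R : realType) (m n : nat) (P : 'M[R]_(m, n)) :
  (0 < m)%N -> (0 < n)%N -> Gamma_pi P ->
  (~~ odd m ->
     (extreme_point (@Gamma_pi R m n) P <->
      forest (bigraph P) /\ (forall i : 'I_m, row_degree P i = 1%N))) /\
  (forall k : nat, m = (2 * k + 1)%N ->
     (extreme_point (@Gamma_pi R m n) P <->
      forest (bigraph P) /\
      (forall i : 'I_m,
         if val i == k then (row_degree P i = 1%N \/ row_degree P i = 2%N)
         else row_degree P i = 1%N))).
Proof.
move=> _ _ hP; split.
  move=> hev; split.
    move=> hext; have hc := nec _ _ _ _ hext; split; first exact: forest_rc.
    by move=> i; have := hc i; rewrite /rcond (negbTE (fix_even _ i hev)).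
  move=> [_ hd]; apply: suff_ext => // i.
  by rewrite /rcond (negbTE (fix_even _ i hev)).
move=> k hm; split.
  move=> hext; have hc := nec _ _ _ _ hext; split; first exact: forest_rc.
  by move=> i; have := hc i; rewrite /rcond (fix_odd _ _ i hm).
move=> [_ hd]; apply: suff_ext => // i.
rewrite /rcond (fix_odd _ _ i hm). exact: hd.
Qed.
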